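(* Let $K\ge 2$, let $T\ge1$, and let $\mathbf{x}(t)\in[0,1]^K$, $t=1,\dots,T$, be any fixed sequence of reward vectors. Run the algorithm REX3 described in the context with transfer function $\psi$ equal to the identity and parameter $\gamma\in(0,\tfrac12)$. Then $$\mathbb{G}_{max}-\mathbb{E}(\mathbb{G}_{alg})\le \frac{K}{\gamma}\ln(K)+\gamma\tau,\qquad \text{where } \tau=e\cdot\mathbb{E}\mathbb{G}_{alg}-(4-e)\cdot\mathbb{E}\mathbb{G}_{unif}.$$
   Context: Adversarial utility-based dueling bandit setting: there are $K$ arms; before play, an (oblivious) environment fixes a horizon $T$ and reward vectors $\mathbf{x}(t)=(x_1(t),\dots,x_K(t))\in[0,1]^K$ for $t=1,\dots,T$. At each round the learner selects a pair of arms $(a_t,b_t)$ and observes only the relative feedback $\psi(x_{a_t}(t)-x_{b_t}(t))$, here with $\psi(z)=z$. Algorithm REX3 with parameter $\gamma$: initialize $w_i(1)=1$ for all $i$. At each round $t$: set $p_i(t)=(1-\gamma)\frac{w_i(t)}{\sum_{j=1}^K w_j(t)}+\frac{\gamma}{K}$; draw two arms $a_t,b_t$ independently according to $\mathbf{p}(t)=(p_1(t),\dots,p_K(t))$; receive $\psi(x_{a_t}(t)-x_{b_t}(t))$; if $a_t\neq b_t$, set $w_{a_t}(t+1)=w_{a_t}(t)\exp\!\big(\frac{\gamma}{K}\frac{\psi(x_{a_t}-x_{b_t})}{2p_{a_t}(t)}\big)$ and $w_{b_t}(t+1)=w_{b_t}(t)\exp\!\big(-\frac{\gamma}{K}\frac{\psi(x_{a_t}-x_{b_t})}{2p_{b_t}(t)}\big)$;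 other weights unchanged. Notation: $\mathbb{G}_{max}=\max_i\sum_{t=1}^T x_i(t)$ (best single-arm gain); $\mathbb{G}_{alg}=\frac12\sum_{t=1}^T\big(x_{a_t}(t)+x_{b_t}(t)\big)$ (gain of the algorithm); $\mathbb{E}\mathbb{G}_{unif}=\frac1K\sum_{t=1}^T\sum_{i=1}^K x_i(t)$. Expectations are over the algorithm's internal randomization. *)

(* Defs.v *)
From HB Require Import structures.
From mathcomp Require Import all_boot all_order all_algebra.
From mathcomp Require Import all_classical all_reals all_analysis.
Set Implicit Arguments. Unset Strict Implicit. Unset Printing Implicit Defensive.
Import Order.TTheory GRing.Theory Num.Theory.
Local Open Scope ring_scope.

(* Rounds are indexed t = 0, ..., T-1 (paper: 1..T).  Arms are 'I_K.
   Reward sequence x : nat -> 'I_K -> R, x t i = x_i(t+1).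
   Transfer function psi = identity. *)

Section REX3.
Variable R : realType.

Definition rex3_p (K : nat) (gamma : R) (w : 'I_K -> R) (i : 'I_K) : R :=
  (1 - gamma) * (w i / \sum_(j < K) w j) + gamma / K%:R.

Definition rex3_update (K : nat) (gamma : R) (xt : 'I_K -> R)
    (w : 'I_K -> R) (a b : 'I_K) : 'I_K -> R :=
  fun i =>
    if a == b then w i
    else if i == a then
      w a * expR (gamma / K%:R * ((xt a - xt b) / (2 * rex3_p gamma w a)))
    else if i == b then
      w b * expR (- (gamma / K%:R * ((xt a - xt b) / (2 * rex3_p gamma w b))))
    else w i.

(* Expected gain (1/2)(x_a(t) + x_b(t)) summed over the n rounds t, ..., t+n-1,
   when the algorithm is in weight state w at round t; the expectation is over
   the independent draws a_t, b_t ~ p(t) at each round. *)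
Fixpoint rex3_EG (K : nat) (gamma : R) (x : nat -> 'I_K -> R)
    (n t : nat) (w : 'I_K -> R) : R :=
  match n with
  | 0 => 0
  | n'.+1 =>
      \sum_(a < K) \sum_(b < K)
        rex3_p gamma w a * rex3_p gamma w b *
        ((x t a + x t b) / 2 + rex3_EG gamma x n' t.+1 (rex3_update gamma (x t) w a b))
  end.

Definition EG_alg (K : nat) (gamma : R) (x : nat -> 'I_K -> R) (T : nat) : R :=
  rex3_EG gamma x T 0 (fun _ => 1).

(* G_max = max_i sum_t x_i(t)  (all sums are >= 0, so 0 is a neutral seed) *)
Definition G_max (K : nat) (x : nat -> 'I_K -> R) (T : nat) : R :=
  \big[Num.max/0]_(i < K) \sum_(t < T) x t i.

Definition EG_unif (K : nat) (x : nat -> 'I_K -> R) (T : nat) : R :=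
  K%:R^-1 * \sum_(t < T) \sum_(i < K) x t i.

End REX3.

(* Main.v *)
Require Import Defs.
From HB Require Import structures.
From mathcomp Require Import all_boot all_order all_algebra.
From mathcomp Require Import all_classical all_reals all_analysis.
From mathcomp Require Import ring lra.
Import Order.TTheory GRing.Theory Num.Theory.
Local Open Scope ring_scope.
Section Exp.
Variable R : realType.
Lemma exp_base (y : R) : `|y| <= 1/64 -> expR y <= 1 + y + 51/50 * y^+2.
Proof.
move=> hy.
have [hy1 hy2] : -(1/64) <= y /\ y <= 1/64 by split; move: hy; rewrite ler_norml => /andP[].
have h1 : 0 < 1 - y by lra.
have h2 : 1 - y <= expR (- y) by have := expR_ge1Dx (- y); lra.
have h3 : expR y <= (1 - y)^-1.
  rewrite -[expR y]invrK -expRN lef_pV2 ?posrE ?expR_gt0 //.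
suff : 1 <= (1 - y) * (1 + y + 51/50 * y^+2).
  move=> H; apply: (le_trans h3).
  rewrite -[X in X <= _]mul1r ler_pdivrMr //.
  by rewrite mulrC.
have : 0 <= y^+2 * (1/50 - 51/50 * y).
  apply: mulr_ge0; [exact: sqr_ge0 | lra].
rewrite expr2; nra.
Qed.

Lemma exp_double (d c c' : R) : 0 <= d -> 0 <= c ->
  (forall y : R, `|y| <= d -> expR y <= 1 + y + c * y^+2) ->
  (1 + 2 * c) / 4 + c * d / 2 + c^+2 * d^+2 / 4 <= c' ->
  forall z : R, `|z| <= 2 * d -> expR z <= 1 + z + c' * z^+2.
Proof.
move=> d0 c0 H hc z hz.
set y := z / 2.
have hzy : z = y + y by rewrite /y; field.
have hyd : `|y| <= d.
  rewrite /y normrM (@ger0_norm _ (2^-1)) ?invr_ge0 //; lra.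
have ez : expR z = expR y * expR y by rewrite hzy expRD.
have P0 : 0 <= expR y := expR_ge0 y.
have P1 := H y hyd.
have hsq : expR z <= (1 + y + c * y^+2) ^+ 2.
  by rewrite ez expr2; apply: ler_pM => //.
apply: (le_trans hsq).
have ya : y^+2 = `|y|^+2 by rewrite real_normK ?num_real.
have hy3 : c * y ^+ 2 * y <= c * y^+2 * d.
  apply: ler_wpM2l; first by apply: mulr_ge0 => //; exact: sqr_ge0.
  exact: le_trans (ler_norm y) hyd.
have hy4 : y^+2 <= d^+2.
  rewrite ya; apply: lerXn2r => //; rewrite ?nnegrE //.
have hy4' : c^+2 * (y^+2 * y^+2) <= c^+2 * (d^+2 * y^+2).
  apply: ler_wpM2l; first exact: sqr_ge0.
  apply: ler_wpM2r => //; exact: sqr_ge0.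
have hc' : y^+2 * ((1 + 2 * c) / 4 + c * d / 2 + c^+2 * d^+2 / 4) <= y^+2 * c'.
  by apply: ler_wpM2l => //; exact: sqr_ge0.
rewrite hzy.
have E : (1 + y + c * y ^+ 2) ^+ 2 = 1 + (y + y) + y^+2 * (1 + 2 * c) + 2 * (c * y^+2 * y) + c^+2 * (y^+2 * y^+2).
  by rewrite !expr2; ring.
rewrite E.
have E2 : c' * (y + y) ^+ 2 = 4 * (y^+2 * c') by rewrite !expr2; ring.
rewrite E2.
move: hc' hy3 hy4'; set Y := y^+2; set A := c * Y * y; set B := c^+2 * (Y * Y).
move=> hc' hy3 hy4'.
have : 4 * (Y * ((1 + 2 * c) / 4 + c * d / 2 + c ^+ 2 * d ^+ 2 / 4)) = Y * (1 + 2 * c) + 2 * (c * Y * d) + c ^+ 2 * (d ^+ 2 * Y) by field.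
lra.
Qed.


Lemma exp_bound (z : R) : `|z| <= 1/2 -> expR z <= 1 + z + 5/8 * z^+2.
Proof.
have H0 : forall y : R, `|y| <= 1/32 -> expR y <= 1 + y + 77/100 * y^+2.
  move=> y hy; apply: (@exp_double (1/64) (51/50)); [lra|lra|exact: exp_base|lra|lra].
have H1 : forall y : R, `|y| <= 1/16 -> expR y <= 1 + y + 13/20 * y^+2.
  move=> y hy; apply: (@exp_double (1/32) (77/100)); [lra|lra|exact: H0|lra|lra].
have H2 : forall y : R, `|y| <= 1/8 -> expR y <= 1 + y + 3/5 * y^+2.
  move=> y hy; apply: (@exp_double (1/16) (13/20)); [lra|lra|exact: H1|lra|lra].
have H3 : forall y : R, `|y| <= 1/4 -> expR y <= 1 + y + 59/100 * y^+2.
  move=> y hy; apply: (@exp_double (1/8) (3/5)); [lra|lra|exact: H2|lra|lra].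
move=> hz; apply: (@exp_double (1/4) (59/100)); [lra|lra|exact: H3|lra|lra].
Qed.

Lemma sq_ge (u r r' : R) : 0 <= r -> r <= u -> r' <= r * r -> r' <= u ^+ 2.
Proof.
move=> r0 ru h; apply: (le_trans h); rewrite expr2; apply: ler_pM => //.
Qed.

Lemma e_ge : 21/8 <= expR (1 : R).
Proof.
have E1 : expR (1 : R) = expR (1/16) ^+ 16.
  by rewrite -expRM_natl mul1r divff.
rewrite E1.
have h : 17/16 <= expR (1/16 : R) by have := expR_ge1Dx (1/16 : R); lra.
have e16 : forall u : R, u ^+ 16 = (((u ^+ 2) ^+ 2) ^+ 2) ^+ 2.
  by move=> u; rewrite -!exprM.
rewrite e16.
set u := expR (1/16).
have h1 : 289/256 <= u ^+ 2 by apply: (@sq_ge _ (17/16)); [lra|by []|lra].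
have h2 : 121/95 <= (u ^+ 2) ^+ 2 by apply: (@sq_ge _ (289/256)); [lra|by []|lra].
have h3 : 47/29 <= ((u ^+ 2) ^+ 2) ^+ 2 by apply: (@sq_ge _ (121/95)); [lra|by []|lra].
by apply: (@sq_ge _ (47/29)); [lra|by []|lra].
Qed.
End Exp.
Section Main.
Set Implicit Arguments.
Variable R : realType.
Variables (K : nat) (gamma : R) (x : nat -> 'I_K -> R).
Hypotheses (K2 : (2 <= K)%N) (g0 : 0 < gamma) (g1 : gamma < 1/2).

Local Notation eta := (gamma / K%:R).
Local Notation cc := (5/8 : R).

Lemma KR0 : 0 < K%:R :> R.
Proof. by rewrite ltr0n; apply: leq_trans K2. Qed.

Lemma eta_gt0 : 0 < eta.
Proof. by apply: divr_gt0 => //; exact: KR0. Qed.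

Definition pos (w : 'I_K -> R) := forall i, 0 < w i.

Lemma sumw_gt0 w : pos w -> 0 < \sum_i w i.
Proof.
move=> wp; have k0 : (0 < K)%N by apply: leq_trans K2.
pose i0 : 'I_K := Ordinal k0.
rewrite (bigD1 i0) //=.
have h : 0 <= \sum_(i < K | i != i0) w i by apply: sumr_ge0 => i _; exact: ltW.
have := wp i0; lra.
Qed.

Lemma sum_ind (F : 'I_K -> R) a : \sum_i (i == a)%:R * F i = F a.
Proof.
rewrite (bigD1 a) //= eqxx mul1r big1 ?addr0 // => i /negbTE ->.
by rewrite mul0r.
Qed.

Lemma sum_ind_r (F : 'I_K -> R) a : \sum_i F i * (i == a)%:R = F a.
Proof. by rewrite -[RHS]sum_ind; apply: eq_bigr => i _; rewrite mulrC. Qed.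

Lemma p_ge w : pos w -> forall i, eta <= rex3_p gamma w i.
Proof.
move=> wp i; rewrite /rex3_p.
have h : 0 <= (1 - gamma) * (w i / \sum_(j < K) w j).
  apply: mulr_ge0; first by have := g1; lra.
  by apply: divr_ge0; [exact: ltW (wp i) | exact: ltW (sumw_gt0 wp)].
lra.
Qed.

Lemma p_gt0 w : pos w -> forall i, 0 < rex3_p gamma w i.
Proof. by move=> wp i; apply: lt_le_trans (p_ge wp i); exact: eta_gt0. Qed.

Lemma psum w : pos w -> \sum_i rex3_p gamma w i = 1.
Proof.
move=> wp; rewrite /rex3_p big_split /= -big_distrr /= -mulr_suml.
rewrite divff ?gt_eqF ?sumw_gt0 // sumr_const card_ord mulr1.
rewrite -[gamma / K%:R *+ K]mulr_natr divfK ?subrK //; exact: lt0r_neq0 KR0.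
Qed.

Lemma wW w : pos w -> forall i,
  w i / \sum_j w j = (1 - gamma)^-1 * (rex3_p gamma w i - eta).
Proof.
move=> wp i; rewrite /rex3_p addrK mulKf //.
by have := g1; lra.
Qed.

Definition zf (w : 'I_K -> R) t a b (i : 'I_K) : R :=
  ((i == a)%:R - (i == b)%:R) * (eta * (x t a - x t b) / (2 * rex3_p gamma w i)).

Lemma upd_eq w t a b i :
  rex3_update gamma (x t) w a b i = w i * expR (zf w t a b i).
Proof.
rewrite /rex3_update /zf; case: (eqVneq a b) => [->|nab].
  by rewrite subrr mul0r expR0 mulr1.
case: (eqVneq i a) => [->|nia].
  by rewrite (negbTE nab) subr0 mul1r mulrA.
case: (eqVneq i b) => [->|nib].
  by rewrite /= sub0r mulN1r mulrA.
by rewrite /= subrr mul0r expR0 mulr1.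
Qed.

Lemma upd_pos w t a b : pos w -> pos (rex3_update gamma (x t) w a b).
Proof. by move=> wp i; rewrite upd_eq; apply: mulr_gt0 => //; exact: expR_gt0. Qed.

Section Step.
Variables (w : 'I_K -> R) (t : nat).
Hypothesis wp : pos w.
Hypothesis xb : forall i, 0 <= x t i <= 1.
Local Notation P := (rex3_p gamma w).
Local Notation W := (\sum_i w i).

Lemma F_bound a b i : `|eta * (x t a - x t b) / (2 * P i)| <= 1/2.
Proof.
have Pp := p_gt0 wp i; have Pe := p_ge wp i; have e0 := eta_gt0.
have := xb a; have := xb b; move=> /andP[h1 h2] /andP[h3 h4].
have P2 : 0 < 2 * P i by lra.
rewrite ler_norml; apply/andP; split.
  rewrite ler_pdivlMr //; nra.
rewrite ler_pdivrMr //; nra.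
Qed.

Lemma delta_bound (u v : bool) : `|(u%:R - v%:R : R)| <= 1.
Proof.
by case: u; case: v; rewrite /= ?mulr1n ?mulr0n ?subrr ?subr0 ?sub0r ?normrN ?normr1 ?normr0.
Qed.

Lemma delta_sq (u v : bool) : ((u%:R - v%:R)^+2 : R) <= u%:R + v%:R.
Proof.
by case: u; case: v; rewrite /= ?mulr1n ?mulr0n ?subrr ?subr0 ?sub0r ?sqrrN ?expr1n ?expr0n /= ?mulr0n ?addr0 ?add0r //; lra.
Qed.

Lemma z_bound a b i : `|zf w t a b i| <= 1/2.
Proof.
rewrite /zf normrM.
rewrite -[1/2 : R]mul1r; apply: ler_pM; [exact: normr_ge0|exact: normr_ge0|exact: delta_bound|exact: F_bound].
Qed.

Lemma step_lnW a b :
  P a * P b * ln (\sum_i rex3_update gamma (x t) w a b i) <=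
  P a * P b * ln W + (1 - gamma)^-1 *
   (eta^+2 / 2 * ((x t a - x t b) * (P a - P b)) +
    cc * eta^+2 / 4 * ((x t a + x t b) * (P a + P b))).
Proof.
have Wp := sumw_gt0 wp.
have Pa := p_gt0 wp a; have Pb := p_gt0 wp b; have e0 := eta_gt0.
have k0 : 0 <= (1 - gamma)^-1 by rewrite invr_ge0; have := g1; lra.
set z := zf w t a b.
have E : \sum_i rex3_update gamma (x t) w a b i = \sum_i w i * expR (z i).
  by apply: eq_bigr => i _; rewrite upd_eq.
rewrite E; set A := \sum_i w i * expR (z i).
have Ap : 0 < A.
  apply: (@sumw_gt0 (fun i => w i * expR (z i))) => i.
  by apply: mulr_gt0 => //; exact: expR_gt0.
have AW : 0 < A / W by apply: divr_gt0.
have h1 : ln A - ln W <= A / W - 1.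
  rewrite -ln_div ?posrE //.
  have hl : ln (1 + (A / W - 1)) <= A / W - 1 by apply: le_ln1Dx; lra.
  by move: hl; have -> : 1 + (A / W - 1) = A / W by ring.
have h2 : A / W - 1 = \sum_i (w i / W) * (expR (z i) - 1).
  have -> : \sum_i (w i / W) * (expR (z i) - 1) =
            \sum_i (w i * expR (z i) / W) - \sum_i (w i / W).
    rewrite -sumrB; apply: eq_bigr => i _; rewrite mulrBr mulr1; congr (_ - _).
    by rewrite mulrAC.
  by rewrite -!mulr_suml divff // gt_eqF.
have h3 : forall i, (w i / W) * (expR (z i) - 1) <=
    (1 - gamma)^-1 * ((P i - eta) * z i + cc * (P i * z i ^+ 2)).
  move=> i; rewrite wW // -mulrA; apply: ler_wpM2l => //.
  have ez := @exp_bound R (z i) (z_bound a b i).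
  have Pe : 0 <= P i - eta by have := p_ge wp i; lra.
  apply: (@le_trans _ _ ((P i - eta) * (z i + cc * z i ^+ 2))).
    by apply: ler_wpM2l => //; lra.
  have q : 0 <= eta * z i ^+ 2 by apply: mulr_ge0; [exact: ltW|exact: sqr_ge0].
  have -> : (P i - eta) * (z i + cc * z i ^+ 2) =
            (P i - eta) * z i + cc * (P i * z i ^+ 2) - cc * (eta * z i ^+ 2) by ring.
  lra.
set F := fun i => eta * (x t a - x t b) / (2 * P i).
have h4 : \sum_i (P i - eta) * z i = (P a - eta) * F a - (P b - eta) * F b.
  rewrite (eq_bigr (fun i => (i == a)%:R * ((P i - eta) * F i) -
                             (i == b)%:R * ((P i - eta) * F i))).
    by rewrite sumrB !sum_ind.
  by move=> i _; rewrite /z /zf /F; ring.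
have h5 : \sum_i P i * z i ^+ 2 <= P a * F a ^+ 2 + P b * F b ^+ 2.
  rewrite -(sum_ind (fun i => P i * F i ^+ 2) a) -(sum_ind (fun i => P i * F i ^+ 2) b).
  rewrite -big_split /=; apply: ler_sum => i _.
  have -> : P i * z i ^+ 2 = ((i == a)%:R - (i == b)%:R) ^+ 2 * (P i * F i ^+ 2).
    by rewrite /z /zf /F; ring.
  rewrite -mulrDl; apply: ler_wpM2r; last exact: delta_sq.
  by apply: mulr_ge0; [exact: ltW (p_gt0 wp i)|exact: sqr_ge0].
set L1 := (P a - eta) * F a - (P b - eta) * F b.
set Q1 := P a * F a ^+ 2 + P b * F b ^+ 2.
have hA : ln A <= ln W + (1 - gamma)^-1 * (L1 + cc * Q1).
  have hs : \sum_i (w i / W) * (expR (z i) - 1) <=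
            \sum_i (1 - gamma)^-1 * ((P i - eta) * z i + cc * (P i * z i ^+ 2)).
    by apply: ler_sum => i _; exact: h3.
  rewrite -big_distrr big_split /= -big_distrr /= h4 -/L1 in hs.
  have : (1 - gamma)^-1 * (L1 + cc * \sum_i P i * z i ^+ 2) <=
         (1 - gamma)^-1 * (L1 + cc * Q1).
    apply: ler_wpM2l => //; apply: lerD => //; apply: ler_wpM2l => //; lra.
  lra.
have hPP : 0 <= P a * P b by apply: mulr_ge0; exact: ltW.
have hB := ler_wpM2l hPP hA.
have e1 : P a * P b * L1 = eta^+2 / 2 * ((x t a - x t b) * (P a - P b)).
  rewrite /L1 /F; field; rewrite !lt0r_neq0 //; exact: KR0.
have e2 : P a * P b * Q1 = eta^+2 / 4 * ((x t a - x t b)^+2 * (P a + P b)).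
  rewrite /Q1 /F; field; rewrite !lt0r_neq0 //; exact: KR0.
have hd : (x t a - x t b)^+2 <= x t a + x t b.
  have := xb a; have := xb b; move=> /andP[u1 u2] /andP[u3 u4]; rewrite expr2; nra.
have hq : cc * eta^+2 / 4 * ((x t a - x t b)^+2 * (P a + P b)) <=
          cc * eta^+2 / 4 * ((x t a + x t b) * (P a + P b)).
  apply: ler_wpM2l.
    by apply: mulr_ge0; [apply: mulr_ge0; [lra|exact: sqr_ge0]|lra].
  by apply: ler_wpM2r => //; lra.
have eqB : P a * P b * (ln W + (1 - gamma)^-1 * (L1 + cc * Q1)) =
  P a * P b * ln W + (1 - gamma)^-1 * (P a * P b * L1 + cc * (P a * P b * Q1)).
  by ring.
rewrite eqB e1 e2 in hB.
apply: (le_trans hB); apply: lerD => //; apply: ler_wpM2l => //.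
have -> : cc * (eta ^+ 2 / 4 * ((x t a - x t b) ^+ 2 * (P a + P b))) =
  cc * eta^+2 / 4 * ((x t a - x t b)^+2 * (P a + P b)) by ring.
lra.
Qed.
End Step.
Section Sums.
Variable (w : 'I_K -> R).
Hypothesis wp : pos w.
Local Notation P := (rex3_p gamma w).

Lemma marg_l (f : 'I_K -> R) : \sum_a \sum_b P a * P b * f a = \sum_a P a * f a.
Proof.
apply: eq_bigr => a _.
rewrite (eq_bigr (fun b => (P a * f a) * P b)); last by move=> b _; ring.
by rewrite -big_distrr /= psum // mulr1.
Qed.

Lemma marg_r (f : 'I_K -> R) : \sum_a \sum_b P a * P b * f b = \sum_b P b * f b.
Proof.
rewrite exchange_big /=; apply: eq_bigr => b _.
rewrite (eq_bigr (fun a => (P b * f b) * P a)); last by move=> a _; ring.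
by rewrite -big_distrr /= psum // mulr1.
Qed.

Lemma marg_c (c : R) : \sum_a \sum_b P a * P b * c = c.
Proof.
by rewrite (marg_l (fun _ => c)) -big_distrl /= psum // mul1r.
Qed.

Lemma inner (c1 c2 c3 : R) (u v h : 'I_K -> R) :
  \sum_b (c1 + c2 * u b + c3 * v b + h b) =
  K%:R * c1 + c2 * \sum_b u b + c3 * \sum_b v b + \sum_b h b.
Proof.
rewrite !big_split /= -!big_distrr /= sumr_const card_ord mulr_natl //.
Qed.


Variable (t : nat).
Local Notation g := (\sum_a P a * x t a).
Local Notation X := (\sum_a x t a).

Lemma S1 : \sum_a \sum_b (x t a - x t b) * (P a - P b) = 2 * (K%:R * g - X).
Proof.
rewrite (eq_bigr (fun a => K%:R * (x t a * P a) - x t a - X * P a + g)); last first.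
  move=> a _.
  rewrite (eq_bigr (fun b => x t a * P a + (- x t a) * P b + (- P a) * x t b + P b * x t b)); last by move=> b _; ring.
  by rewrite inner psum //; ring.
rewrite (eq_bigr (fun a => g + (-1) * x t a + (- X) * P a + K%:R * (x t a * P a))); last by move=> a _; ring.
rewrite inner psum // -big_distrr /=.
have -> : \sum_i x t i * P i = g by apply: eq_bigr => i _; rewrite mulrC.
ring.
Qed.

Lemma S2 : \sum_a \sum_b (x t a + x t b) * (P a + P b) = 2 * (K%:R * g + X).
Proof.
rewrite (eq_bigr (fun a => K%:R * (x t a * P a) + x t a + X * P a + g)); last first.
  move=> a _.
  rewrite (eq_bigr (fun b => x t a * P a + (x t a) * P b + (P a) * x t b + P b * x t b)); last by move=> b _; ring.
  by rewrite inner psum //; ring.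
rewrite (eq_bigr (fun a => g + 1 * x t a + X * P a + K%:R * (x t a * P a))); last by move=> a _; ring.
rewrite inner psum // -big_distrr /=.
have -> : \sum_i x t i * P i = g by apply: eq_bigr => i _; rewrite mulrC.
ring.
Qed.

Lemma step_gain : \sum_a \sum_b P a * P b * ((x t a + x t b) / 2) = g.
Proof.
rewrite (eq_bigr (fun a => 2^-1 * \sum_b P a * P b * x t a + 2^-1 * \sum_b P a * P b * x t b)); last first.
  move=> a _; rewrite !big_distrr -big_split /=; apply: eq_bigr => b _; ring.
rewrite big_split /= -!big_distrr /= marg_l marg_r; lra.
Qed.

Lemma step_lnj j :
  \sum_a \sum_b P a * P b * ln (rex3_update gamma (x t) w a b j) =
  ln (w j) + eta * (x t j - g).
Proof.
have Pj := p_gt0 wp j.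
have H : forall a b, P a * P b * ln (rex3_update gamma (x t) w a b j) =
   P a * P b * ln (w j) + (j == a)%:R * (P a * P b * (eta * (x t a - x t b) / (2 * P j)))
   - (j == b)%:R * (P a * P b * (eta * (x t a - x t b) / (2 * P j))).
  move=> a b; rewrite upd_eq lnM ?posrE ?expR_gt0 // expRK /zf; ring.
rewrite (eq_bigr (fun a => \sum_b (P a * P b * ln (w j) + (j == a)%:R * (P a * P b * (eta * (x t a - x t b) / (2 * P j)))
   - (j == b)%:R * (P a * P b * (eta * (x t a - x t b) / (2 * P j)))))); last first.
  by move=> a _; apply: eq_bigr => b _; exact: H.
rewrite (eq_bigr (fun a => \sum_b P a * P b * ln (w j) + (j == a)%:R * \sum_b (P a * P b * (eta * (x t a - x t b) / (2 * P j)))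
   - \sum_b (j == b)%:R * (P a * P b * (eta * (x t a - x t b) / (2 * P j))))); last first.
  by move=> a _; rewrite sumrB big_split /= -big_distrr.
rewrite sumrB big_split /= marg_c.
set G := fun a b => P a * P b * (eta * (x t a - x t b) / (2 * P j)).
have T1 : \sum_a (j == a)%:R * \sum_b G a b = \sum_b G j b.
  rewrite (eq_bigr (fun a => (a == j)%:R * \sum_b G a b)); last by move=> a _; rewrite eq_sym.
  by rewrite (sum_ind (fun a => \sum_b G a b)).
have T2 : \sum_a \sum_b (j == b)%:R * G a b = \sum_a G a j.
  apply: eq_bigr => a _.
  rewrite (eq_bigr (fun b => (b == j)%:R * G a b)); last by move=> b _; rewrite eq_sym.
  by rewrite (sum_ind (fun b => G a b)).
rewrite T1 T2 /G.
rewrite (eq_bigr (fun b => eta / 2 * x t j * P b + (- (eta / 2)) * (P b * x t b))); last first.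
  by move=> b _; field; rewrite !lt0r_neq0 // KR0.
rewrite [X in _ - X](eq_bigr (fun a => eta / 2 * (P a * x t a) + (- (eta / 2) * x t j) * P a)); last first.
  by move=> a _; field; rewrite !lt0r_neq0 // KR0.
rewrite !big_split /= -!big_distrr /= psum //.
set gg := \sum_i P i * x t i.
lra.
Qed.

End Sums.
Fixpoint Ex (f : ('I_K -> R) -> R) (n t : nat) (w : 'I_K -> R) {struct n} : R :=
  match n with
  | 0 => f w
  | n'.+1 => \sum_a \sum_b rex3_p gamma w a * rex3_p gamma w b *
               Ex f n' t.+1 (rex3_update gamma (x t) w a b)
  end.

Lemma Ex_mono f h : (forall v, pos v -> f v <= h v) ->
  forall n t w, pos w -> Ex f n t w <= Ex h n t w.
Proof.
move=> fh; elim=> [|n IH] t w wp /=; first exact: fh.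
apply: ler_sum => a _; apply: ler_sum => b _; apply: ler_wpM2l.
  by apply: mulr_ge0; exact: ltW (p_gt0 wp _).
by apply: IH; exact: upd_pos.
Qed.

Lemma Ex_addc c f n t w : pos w -> Ex (fun v => c + f v) n t w = c + Ex f n t w.
Proof.
elim: n t w => [|n IH] t w wp //=.
have -> : \sum_a \sum_b rex3_p gamma w a * rex3_p gamma w b *
    Ex (fun v => c + f v) n t.+1 (rex3_update gamma (x t) w a b) =
  \sum_a (\sum_b rex3_p gamma w a * rex3_p gamma w b * c +
          \sum_b rex3_p gamma w a * rex3_p gamma w b * Ex f n t.+1 (rex3_update gamma (x t) w a b)).
  apply: eq_bigr => a _; rewrite -big_split /=; apply: eq_bigr => b _.
  by rewrite IH ?mulrDr //; exact: upd_pos.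
by rewrite big_split /= marg_c.
Qed.

Lemma Ex_scale c f n t w : Ex (fun v => c * f v) n t w = c * Ex f n t w.
Proof.
elim: n t w => [|n IH] t w //=.
rewrite big_distrr; apply: eq_bigr => a _; rewrite big_distrr; apply: eq_bigr => b _.
by rewrite IH mulrCA.
Qed.

Lemma Ex_sum (f : 'I_K -> ('I_K -> R) -> R) n t w :
  Ex (fun v => \sum_j f j v) n t w = \sum_j Ex (f j) n t w.
Proof.
elim: n t w => [|n IH] t w //=.
have -> : \sum_a \sum_b rex3_p gamma w a * rex3_p gamma w b *
    Ex (fun v => \sum_j f j v) n t.+1 (rex3_update gamma (x t) w a b) =
  \sum_a \sum_b \sum_j rex3_p gamma w a * rex3_p gamma w b *
    Ex (f j) n t.+1 (rex3_update gamma (x t) w a b).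
  by apply: eq_bigr => a _; apply: eq_bigr => b _; rewrite IH big_distrr.
rewrite (eq_bigr (fun a => \sum_j \sum_b rex3_p gamma w a * rex3_p gamma w b *
    Ex (f j) n t.+1 (rex3_update gamma (x t) w a b))); last first.
  by move=> a _; rewrite exchange_big.
by rewrite exchange_big.
Qed.

Definition Xs n t := \sum_(r < n) \sum_i x (t + r) i.
Definition Sj j n t := \sum_(r < n) x (t + r) j.

Lemma Xs_S n t : Xs n.+1 t = \sum_i x t i + Xs n t.+1.
Proof.
rewrite /Xs big_ord_recl addn0; congr (_ + _); apply: eq_bigr => r _.
by rewrite lift0 addSnnS.
Qed.

Lemma Sj_S j n t : Sj j n.+1 t = x t j + Sj j n t.+1.
Proof.
rewrite /Sj big_ord_recl addn0; congr (_ + _); apply: eq_bigr => r _.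
by rewrite lift0 addSnnS.
Qed.

Definition Xok n t := forall r i, (t <= r)%N -> (r < t + n)%N -> 0 <= x r i <= 1.

Lemma Xok_t n t : Xok n.+1 t -> forall i, 0 <= x t i <= 1.
Proof. by move=> h i; apply: h => //; rewrite addnS ltnS leq_addr. Qed.

Lemma Xok_S n t : Xok n.+1 t -> Xok n t.+1.
Proof.
move=> h r i h1 h2; apply: h; first exact: ltnW.
by rewrite addnS; move: h2; rewrite addSn.
Qed.

Lemma EG_S n t w : rex3_EG gamma x n.+1 t w =
  \sum_a \sum_b rex3_p gamma w a * rex3_p gamma w b *
    ((x t a + x t b) / 2 + rex3_EG gamma x n t.+1 (rex3_update gamma (x t) w a b)).
Proof. by []. Qed.

Lemma EG_split n t w : pos w -> rex3_EG gamma x n.+1 t w =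
  \sum_a rex3_p gamma w a * x t a +
  \sum_a \sum_b rex3_p gamma w a * rex3_p gamma w b *
     rex3_EG gamma x n t.+1 (rex3_update gamma (x t) w a b).
Proof.
move=> wp; rewrite EG_S -(step_gain wp t) -big_split /=; apply: eq_bigr => a _.
by rewrite -big_split /=; apply: eq_bigr => b _; rewrite mulrDr.
Qed.

Lemma EG_ge0 n t w : Xok n t -> pos w -> 0 <= rex3_EG gamma x n t w.
Proof.
elim: n t w => [|n IH] t w xo wp //=.
apply: sumr_ge0 => a _; apply: sumr_ge0 => b _; apply: mulr_ge0.
  by apply: mulr_ge0; exact: ltW (p_gt0 wp _).
have := Xok_t xo a; have := Xok_t xo b; move=> /andP[h1 _] /andP[h2 _].
apply: addr_ge0; first by apply: divr_ge0; [exact: addr_ge0|lra].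
by apply: IH; [exact: Xok_S|exact: upd_pos].
Qed.

Lemma mainB j n : forall t w, pos w ->
  Ex (fun v => ln (v j)) n t w = ln (w j) + eta * (Sj j n t - rex3_EG gamma x n t w).
Proof.
elim: n => [|n IH] t w wp.
  by rewrite /= /Sj big_ord0 subrr mulr0 addr0.
rewrite [Ex _ _ _ _]/= EG_split // Sj_S.
set M := \sum_a \sum_b rex3_p gamma w a * rex3_p gamma w b *
     rex3_EG gamma x n t.+1 (rex3_update gamma (x t) w a b).
have -> : \sum_a \sum_b rex3_p gamma w a * rex3_p gamma w b *
    Ex (fun v => ln (v j)) n t.+1 (rex3_update gamma (x t) w a b) =
  \sum_a \sum_b rex3_p gamma w a * rex3_p gamma w b * ln (rex3_update gamma (x t) w a b j)
  + \sum_a \sum_b rex3_p gamma w a * rex3_p gamma w b * (eta * Sj j n t.+1)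
  - eta * M.
  rewrite /M [X in _ - X]big_distrr -big_split -sumrB /=; apply: eq_bigr => a _.
  rewrite [X in _ - X]big_distrr -big_split -sumrB /=; apply: eq_bigr => b _.
  by rewrite IH; [ring | exact: upd_pos].
rewrite marg_c // step_lnj //; ring.
Qed.

Lemma mainA n : forall t w, Xok n t -> pos w ->
  Ex (fun v => ln (\sum_i v i)) n t w <= ln (\sum_i w i) +
    (1 - gamma)^-1 * eta^+2 *
    ((1 + cc / 2) * K%:R * rex3_EG gamma x n t w - (1 - cc / 2) * Xs n t).
Proof.
elim: n => [|n IH] t w xo wp.
  rewrite /= /Xs big_ord0; lra.
have xb := Xok_t xo; have xo' := Xok_S xo.
have k0 : 0 <= (1 - gamma)^-1 by rewrite invr_ge0; have := g1; lra.
set C := (1 - gamma)^-1 * eta^+2.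
set M := \sum_a \sum_b rex3_p gamma w a * rex3_p gamma w b *
     rex3_EG gamma x n t.+1 (rex3_update gamma (x t) w a b).
set L := \sum_a \sum_b rex3_p gamma w a * rex3_p gamma w b *
     ln (\sum_i rex3_update gamma (x t) w a b i).
have h1 : Ex (fun v => ln (\sum_i v i)) n.+1 t w <=
    L + C * ((1 + cc / 2) * K%:R) * M - C * (1 - cc / 2) * Xs n t.+1.
  have -> : L + C * ((1 + cc / 2) * K%:R) * M - C * (1 - cc / 2) * Xs n t.+1 =
    \sum_a \sum_b rex3_p gamma w a * rex3_p gamma w b *
      (ln (\sum_i rex3_update gamma (x t) w a b i) +
       C * ((1 + cc / 2) * K%:R * rex3_EG gamma x n t.+1 (rex3_update gamma (x t) w a b)
            - (1 - cc / 2) * Xs n t.+1)).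
    rewrite -[C * (1 - cc/2) * Xs n t.+1](marg_c wp) /L /M.
    rewrite [X in _ + X - _]big_distrr -big_split -sumrB /=.
    apply: eq_bigr => a _.
    rewrite [X in _ + X - _]big_distrr -big_split -sumrB /=; apply: eq_bigr => b _; ring.
  rewrite [Ex _ _ _ _]/=.
  apply: ler_sum => a _; apply: ler_sum => b _; apply: ler_wpM2l.
    by apply: mulr_ge0; exact: ltW (p_gt0 wp _).
  by apply: IH => //; exact: upd_pos.
have h2 : L <= ln (\sum_i w i) + C * ((K%:R * (\sum_a rex3_p gamma w a * x t a) - \sum_a x t a)
            + cc / 2 * (K%:R * (\sum_a rex3_p gamma w a * x t a) + \sum_a x t a)).
  have hs : L <= \sum_a \sum_b (rex3_p gamma w a * rex3_p gamma w b * ln (\sum_i w i) +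
     (1 - gamma)^-1 * (eta^+2 / 2 * ((x t a - x t b) * (rex3_p gamma w a - rex3_p gamma w b)) +
      cc * eta^+2 / 4 * ((x t a + x t b) * (rex3_p gamma w a + rex3_p gamma w b)))).
    by apply: ler_sum => a _; apply: ler_sum => b _; exact: step_lnW.
  apply: (le_trans hs) => {hs}.
  rewrite (eq_bigr (fun a => \sum_b rex3_p gamma w a * rex3_p gamma w b * ln (\sum_i w i) +
     ((1 - gamma)^-1 * (eta^+2 / 2)) * \sum_b ((x t a - x t b) * (rex3_p gamma w a - rex3_p gamma w b)) +
     ((1 - gamma)^-1 * (cc * eta^+2 / 4)) * \sum_b ((x t a + x t b) * (rex3_p gamma w a + rex3_p gamma w b)))); last first.
    move=> a _; rewrite !big_distrr -!big_split /=; apply: eq_bigr => b _; ring.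
  rewrite !big_split /= -!big_distrr /= marg_c // S1 // S2 //.
  rewrite /C -addrA; apply: lerD => //.
  rewrite le_eqVlt; apply/orP; left; apply/eqP.
  field; rewrite lt0r_neq0 ?KR0 //=; apply: lt0r_neq0; have := g1; lra.
rewrite (EG_split n t wp) Xs_S -/M.
set g := \sum_a rex3_p gamma w a * x t a.
set X := \sum_a x t a.
move: h1 h2; rewrite -/g -/X => h1 h2.
have E : C * ((1 + cc / 2) * K%:R * (g + M) - (1 - cc / 2) * (X + Xs n t.+1)) =
   C * ((K%:R * g - X) + cc / 2 * (K%:R * g + X)) +
   (C * ((1 + cc / 2) * K%:R) * M - C * (1 - cc / 2) * Xs n t.+1) by ring.
rewrite E; lra.
Qed.
Lemma jensen (v : 'I_K -> R) : pos v ->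
  ln K%:R + K%:R^-1 * \sum_j ln (v j) <= ln (\sum_i v i).
Proof.
move=> vp; have Kp := KR0.
set S := \sum_i v i; have Sp : 0 < S := sumw_gt0 vp.
set Mv := S / K%:R; have Mp : 0 < Mv by apply: divr_gt0.
have h : forall j, ln (v j) - ln Mv <= v j / Mv - 1.
  move=> j; rewrite -ln_div ?posrE ?vp //.
  have hl : ln (1 + (v j / Mv - 1)) <= v j / Mv - 1.
    apply: le_ln1Dx; have : 0 < v j / Mv by apply: divr_gt0 => //; exact: vp.
    lra.
  by move: hl; have -> : 1 + (v j / Mv - 1) = v j / Mv by ring.
have hs : \sum_j (ln (v j) - ln Mv) <= \sum_j (v j / Mv - 1) by apply: ler_sum => j _; exact: h.
rewrite !sumrB !sumr_const card_ord -mulr_suml -/S in hs.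
have e1 : S / Mv = K%:R by rewrite /Mv; field; rewrite !lt0r_neq0.
have e2 : ln Mv = ln S - ln K%:R by rewrite /Mv ln_div ?posrE.
rewrite e1 e2 -[(ln S - ln K%:R) *+ K]mulr_natr in hs.
have : K%:R^-1 * (\sum_j ln (v j)) <= K%:R^-1 * (K%:R * (ln S - ln K%:R)).
  apply: ler_wpM2l; first by rewrite invr_ge0 ltW.
  move: hs; set Z := \sum_j ln (v j).
  have -> : K%:R * (ln S - ln K%:R) = (ln S - ln K%:R) * K%:R by rewrite mulrC.
  lra.
rewrite mulKf ?lt0r_neq0 //; lra.
Qed.

Lemma final_arith (Kr lnK e G X Sj : R) :
  0 < Kr -> 0 <= lnK -> 21/8 <= e -> 0 <= G -> 0 <= X ->
  gamma/Kr * (Sj - G) <= lnK + (1-gamma)^-1 * (gamma/Kr)^+2 * ((1 + cc/2) * Kr * G - (1 - cc/2) * X) ->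
  Kr^-1 * (gamma/Kr * (X - Kr * G)) <= (1-gamma)^-1 * (gamma/Kr)^+2 * ((1 + cc/2) * Kr * G - (1 - cc/2) * X) ->
  Sj - G <= Kr / gamma * lnK + gamma * (e * G - (4 - e) * (Kr^-1 * X)).
Proof.
move=> Kp lK he G0 X0 h1 h2.
have gg0 := g0; have gg1 := g1.
set U := Kr^-1 * X.
have U0 : 0 <= U by apply: mulr_ge0 => //; rewrite invr_ge0 ltW.
have XU : X = Kr * U by rewrite /U mulrA divff ?mul1r // lt0r_neq0.
set et := gamma / Kr.
have etp : 0 < et by apply: divr_gt0.
set s := gamma / (1 - gamma).
have sp : 0 < s by apply: divr_gt0 => //; lra.
set Y := (1 + cc/2) * G - (1 - cc/2) * U.
have eC : (1-gamma)^-1 * et^+2 * ((1 + cc/2) * Kr * G - (1 - cc/2) * X) = et * (s * Y).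
  rewrite XU /Y /s /et; field; rewrite !lt0r_neq0 //; lra.
rewrite eC in h1 h2.
have e2 : Kr^-1 * (et * (X - Kr * G)) = et * (U - G).
  by rewrite XU /et; field; rewrite lt0r_neq0.
rewrite e2 in h2.
have h2' : U - G <= s * Y by rewrite -(ler_pM2l etp).
have e1 : Kr / gamma * lnK = lnK / et by rewrite /et; field; rewrite !lt0r_neq0.
have h1' : Sj - G <= lnK / et + s * Y.
  have : et * (Sj - G) <= et * (lnK / et + s * Y).
    rewrite [X in _ <= X]mulrDr [X in _ <= X + _]mulrCA divff ?mulr1; [exact: h1 | exact: lt0r_neq0].
  by rewrite ler_pM2l.
have Y0 : 0 <= Y.
  case: (ltP Y 0) => // Yn.
  have : s * Y < 0 by rewrite pmulr_rlt0.
  rewrite /Y in Yn; lra.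
have s2 : s <= 2 * gamma.
  rewrite /s ler_pdivrMr; last lra.
  nra.
have h3 : s * Y <= 2 * gamma * Y by apply: ler_wpM2r.
have h4 : 2 * gamma * Y <= gamma * (e * G - (4 - e) * U).
  rewrite [2 * gamma]mulrC -mulrA; apply: ler_wpM2l; first lra.
  rewrite /Y.
  have : 0 <= (e - 2 - cc) * (G + U) by apply: mulr_ge0; lra.
  lra.
rewrite e1; lra.
Qed.

Lemma final_main (T : nat) :
  (forall (t : nat) (i : 'I_K), (t < T)%N -> 0 <= x t i <= 1) ->
  G_max x T - EG_alg gamma x T <=
    K%:R / gamma * ln K%:R
    + gamma * (expR 1 * EG_alg gamma x T - (4 - expR 1) * EG_unif x T).
Proof.
move=> hx; have Kp := KR0.
pose w1 := fun _ : 'I_K => 1 : R.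
have wp : pos w1 by move=> i; rewrite /w1 ltr01.
have xo : Xok T 0 by move=> r i _ h; apply: hx; rewrite add0n in h.
have -> : EG_alg gamma x T = rex3_EG gamma x T 0 w1 by [].
set G := rex3_EG gamma x T 0 w1.
have G0 : 0 <= G := EG_ge0 xo wp.
have sw : \sum_i w1 i = K%:R by rewrite /w1 sumr_const card_ord.
set C := (1 - gamma)^-1 * eta^+2.
have hA := mainA xo wp.
rewrite sw -/G in hA.
have hB : forall j, Ex (fun v => ln (v j)) T 0 w1 = eta * (Sj j T 0 - G).
  by move=> j; rewrite mainB // /w1 ln1 add0r.
set X := Xs T 0.
have X0 : 0 <= X.
  apply: sumr_ge0 => r _; apply: sumr_ge0 => i _.
  by have /andP[] := hx (0 + r)%N i (ltn_ord r).
have hJ : ln K%:R + K%:R^-1 * (eta * (X - K%:R * G)) <= ln K%:R + C *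
    ((1 + cc / 2) * K%:R * G - (1 - cc / 2) * X).
  apply: le_trans hA.
  have := @Ex_mono (fun v => ln K%:R + K%:R^-1 * \sum_j ln (v j)) (fun v => ln (\sum_i v i)) jensen T 0 w1 wp.
  rewrite Ex_addc // Ex_scale Ex_sum.
  have -> : \sum_j Ex (fun v => ln (v j)) T 0 w1 = eta * (X - K%:R * G).
    rewrite (eq_bigr (fun j => eta * Sj j T 0 - eta * G)); last by move=> j _; rewrite hB mulrBr.
    rewrite sumrB -big_distrr sumr_const card_ord /= -[eta * G *+ K]mulr_natl mulrBr; congr (_ - _).
      congr (_ * _); rewrite /X /Xs /Sj exchange_big //.
    by rewrite mulrCA.
  by [].
have lK : 0 <= ln (K%:R : R).
  by apply: ln_ge0; rewrite ler1n; apply: leq_trans K2.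
have he := @e_ge R.
have hj : forall j, Sj j T 0 - G <= K%:R / gamma * ln K%:R +
    gamma * (expR 1 * G - (4 - expR 1) * (K%:R^-1 * X)).
  move=> j; apply: final_arith => //.
    have := hA; apply: le_trans.
    rewrite -(hB j); apply: Ex_mono => // v vp.
    rewrite ler_ln ?posrE //; last exact: sumw_gt0.
    rewrite (bigD1 j) //= lerDl; apply: sumr_ge0 => i _; exact: ltW.
  move: hJ; rewrite /C; lra.
have -> : EG_unif x T = K%:R^-1 * X.
  by rewrite /EG_unif /X /Xs; congr (_ * _); apply: eq_bigr => r _; rewrite add0n.
have k0 : (0 < K)%N by apply: leq_trans K2.
have hj0 := hj (Ordinal k0).
have S0 : 0 <= Sj (Ordinal k0) T 0.
  apply: sumr_ge0 => r _.
  by have /andP[] := hx (0 + r)%N (Ordinal k0) (ltn_ord r).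
rewrite lerBlDl; apply: bigmax_le.
  lra.
move=> j _.
have := hj j; rewrite /Sj.
under eq_bigr => r _ do rewrite add0n.
lra.
Qed.
End Main.

Theorem theorem1 (R : realType) (K T : nat) (x : nat -> 'I_K -> R) (gamma : R) :
  (2 <= K)%N -> (1 <= T)%N ->
  (forall (t : nat) (i : 'I_K), (t < T)%N -> 0 <= x t i <= 1) ->
  0 < gamma -> gamma < 1 / 2 ->
  G_max x T - EG_alg gamma x T <=
    K%:R / gamma * ln K%:R
    + gamma * (expR 1 * EG_alg gamma x T - (4 - expR 1) * EG_unif x T).
Proof.
move=> K2 T1 hx g0 g1.
by apply: final_main.
Qed.
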